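(* Let $V$ be a Hausdorff, sequentially complete locally convex space whose topology is induced by a family $\mathcal P$ of seminorms, let $\Omega\subset\mathbb R^m$ be open and $k\in(0,\infty)\setminus\mathbb N$. A function $f\colon\Omega\to V$ belongs to $C^k(\Omega,V)$ if and only if for each $p\in\mathcal P$ there is $C\in(0,\infty)$ such that for every continuous linear form $l\in V'$ one has $l\circ f\in C^k(\Omega,\mathbb R)$ and $|l\circ f|_k\le C\,p^*(l)$.
   Context: $V'$ denotes the space of continuous linear forms $V\to\mathbb R$; for $l\in V'$, $p\in\mathcal P$, $p^*(l)=\sup\{l(v)\colon v\in V,\ p(v)\le1\}\le\infty$. For $k\in(0,\infty)\setminus\mathbb N$ write $[k]$ for its integer part and $\{k\}=k-[k]$. A function $f\colon\Omega\to V$ is in $C^k(\Omega,V)$ if it is bounded, has partial derivatives of all orders $\le[k]$, and every such partial $g=\partial^\alpha f$, $|\alpha|\le[k]$, satisfies $\tilde p_{\{k\}}(g)=\sup\{p(g(s)-g(t))/|s-t|^{\{k\}}\colon s,t\in\Omega,\ s\ne t\}<\infty$ for all $p\in\mathcal P$. For $p\in\mathcal P$ put $p_k(f)=\max\{\sup_\Omega p(f),\ \tilde p_{\{k\}}(\partial^\alpha f)\colon|\alpha|\le[k]\}$; when $V=\mathbb R$, $p=|\cdot|$, this is written $|\cdot|_k$ (the usual Hölder norm). *)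

(* Defs.v *)
From mathcomp Require Import ssreflect ssrfun ssrbool eqtype ssrnat seq fintype.
From Stdlib Require Import Reals Lra.
Open Scope R_scope.

Record LCS := {
  car : Type;
  vadd : car -> car -> car;
  vzero : car;
  vopp : car -> car;
  vscal : R -> car -> car;
  vaddA : forall x y z, vadd x (vadd y z) = vadd (vadd x y) z;
  vaddC : forall x y, vadd x y = vadd y x;
  vadd0 : forall x, vadd x vzero = x;
  vaddN : forall x, vadd x (vopp x) = vzero;
  vscalA : forall a b x, vscal a (vscal b x) = vscal (a * b) x;
  vscal1 : forall x, vscal 1 x = x;
  vscalDr : forall a x y, vscal a (vadd x y) = vadd (vscal a x) (vscal a y);
  vscalDl : forall a b x, vscal (a + b) x = vadd (vscal a x) (vscal b x);
  Idx : Type;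
  sn : Idx -> car -> R;
  sn_triangle : forall i x y, sn i (vadd x y) <= sn i x + sn i y;
  sn_scal : forall i a x, sn i (vscal a x) = Rabs a * sn i x
}.

Definition vsub (V : LCS) (x y : car V) : car V := vadd V x (vopp V y).

Definition hausdorff (V : LCS) : Prop :=
  forall x : car V, (forall i, sn V i x = 0) -> x = vzero V.

Definition cauchy_seq (V : LCS) (u : nat -> car V) : Prop :=
  forall i eps, 0 < eps -> exists N : nat, forall n p : nat,
    (N <= n)%coq_nat -> (N <= p)%coq_nat -> sn V i (vsub V (u n) (u p)) < eps.

Definition converges_to (V : LCS) (u : nat -> car V) (x : car V) : Prop :=
  forall i eps, 0 < eps -> exists N : nat, forall n : nat,
    (N <= n)%coq_nat -> sn V i (vsub V (u n) x) < eps.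

Definition seq_complete (V : LCS) : Prop :=
  forall u, cauchy_seq V u -> exists x, converges_to V u x.

(* l : V -> R belongs to V' : linear and continuous for the topology
   induced by the seminorms (basic neighbourhoods are finite
   intersections of seminorm balls). *)
Definition cont_linear (V : LCS) (l : car V -> R) : Prop :=
  (forall x y, l (vadd V x y) = l x + l y) /\
  (forall a x, l (vscal V a x) = a * l x) /\
  (forall x eps, 0 < eps -> exists (F : list (Idx V)) (delta : R), 0 < delta /\
     forall y, (forall i, List.In i F -> sn V i (vsub V y x) < delta) ->
       Rabs (l y - l x) < eps).

(* [dual_bound V i l B] : B is an upper bound of {l(v) : p_i(v) <= 1}.
   Hence "X <= C * p^*(l)" (with p^*(l) in [0,oo]) is expressed as
   "forall B, dual_bound V i l B -> X <= C * B". *)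
Definition dual_bound (V : LCS) (i : Idx V) (l : car V -> R) (B : R) : Prop :=
  forall v, sn V i v <= 1 -> l v <= B.

Lemma R_sn_triangle : forall (i : unit) (x y : R), Rabs (x + y) <= Rabs x + Rabs y.
Proof. intros; apply Rabs_triang. Qed.
Lemma R_sn_scal : forall (i : unit) (a x : R), Rabs (a * x) = Rabs a * Rabs x.
Proof. intros; apply Rabs_mult. Qed.

Definition RLCS : LCS :=
  {| car := R; vadd := Rplus; vzero := 0; vopp := Ropp; vscal := Rmult;
     vaddA := fun x y z => Logic.eq_sym (Rplus_assoc x y z);
     vaddC := Rplus_comm;
     vadd0 := Rplus_0_r;
     vaddN := Rplus_opp_r;
     vscalA := fun a b x => Logic.eq_sym (Rmult_assoc a b x);
     vscal1 := Rmult_1_l;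
     vscalDr := Rmult_plus_distr_l;
     vscalDl := Rmult_plus_distr_r;
     Idx := unit;
     sn := fun _ x => Rabs x;
     sn_triangle := R_sn_triangle;
     sn_scal := R_sn_scal |}.

Definition Rm (m : nat) := 'I_m -> R.

Definition distRm (m : nat) (s t : Rm m) : R :=
  sqrt (foldr (fun i acc => (s i - t i) * (s i - t i) + acc) 0 (enum 'I_m)).

Definition is_open (m : nat) (Om : Rm m -> Prop) : Prop :=
  forall s, Om s -> exists r, 0 < r /\ forall t, distRm m t s < r -> Om t.

Definition shift (m : nat) (s : Rm m) (j : 'I_m) (h : R) : Rm m :=
  fun i => if i == j then s i + h else s i.

Definition is_partial (V : LCS) (m : nat) (Om : Rm m -> Prop)
    (g : Rm m -> car V) (j : 'I_m) (d : Rm m -> car V) : Prop :=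
  forall s, Om s -> forall i eps, 0 < eps -> exists delta, 0 < delta /\
    forall h, h <> 0 -> Rabs h < delta -> Om (shift m s j h) ->
      sn V i (vsub V (vscal V (/ h) (vsub V (g (shift m s j h)) (g s))) (d s))
        < eps.

(* D w is the iterated partial derivative of f along the word of directions
   w (the last-applied direction first); all iterated partials of order
   <= n exist on Om. *)
Definition deriv_family (V : LCS) (m : nat) (Om : Rm m -> Prop) (n : nat)
    (f : Rm m -> car V) (D : list 'I_m -> Rm m -> car V) : Prop :=
  (forall s, Om s -> D nil s = f s) /\
  (forall (w : list 'I_m) (j : 'I_m), (length w < n)%coq_nat ->
     is_partial V m Om (D w) j (D (j :: w))).

Definition ipart (k : R) : nat := Z.to_nat (Int_part k).
Definition fpart (k : R) : R := frac_part k.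

Definition holder_le (V : LCS) (m : nat) (Om : Rm m -> Prop) (theta : R)
    (g : Rm m -> car V) (i : Idx V) (M : R) : Prop :=
  forall s t, Om s -> Om t -> s <> t ->
    sn V i (vsub V (g s) (g t)) <= M * Rpower (distRm m s t) theta.

Definition in_Ck (V : LCS) (m : nat) (Om : Rm m -> Prop) (k : R)
    (f : Rm m -> car V) : Prop :=
  exists D, deriv_family V m Om (ipart k) f D /\
    (forall i, exists M, forall s, Om s -> sn V i (f s) <= M) /\
    (forall w, (length w <= ipart k)%coq_nat ->
       forall i, exists M, holder_le V m Om (fpart k) (D w) i M).

(* p_k(f) <= M  (derivatives are unique on the open set Om) *)
Definition Ck_seminorm_le (V : LCS) (m : nat) (Om : Rm m -> Prop) (k : R)
    (f : Rm m -> car V) (i : Idx V) (M : R) : Prop :=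
  exists D, deriv_family V m Om (ipart k) f D /\
    (forall s, Om s -> sn V i (f s) <= M) /\
    (forall w, (length w <= ipart k)%coq_nat ->
       holder_le V m Om (fpart k) (D w) i M).

(* Main.v *)
From mathcomp Require Import ssreflect ssrfun ssrbool eqtype ssrnat seq fintype.
From mathcomp Require classical_sets.
From Stdlib Require Import Reals Lra Lia ZArith Classical ClassicalEpsilon FunctionalExtensionality.
Require Import Defs.
Open Scope R_scope.

Section Alg.
Context (V : LCS).
Local Notation "x +v y" := (vadd V x y) (at level 50, left associativity).
Local Notation "-v x" := (vopp V x) (at level 35).
Local Notation "a *v x" := (vscal V a x) (at level 40).
Local Notation "0v" := (vzero V).

Lemma vadd0l x : 0v +v x = x.
Proof. by rewrite vaddC vadd0. Qed.

Lemma vaddNl x : (-v x) +v x = 0v.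
Proof. by rewrite vaddC vaddN. Qed.

Lemma vadd_cancel x y z : x +v y = x +v z -> y = z.
Proof.
move=> H. have: (-v x) +v (x +v y) = (-v x) +v (x +v z) by rewrite H.
by rewrite !vaddA vaddNl !vadd0l.
Qed.

Lemma vscal0 x : 0 *v x = 0v.
Proof.
apply: (vadd_cancel (0 *v x)). rewrite vadd0 -vscalDl. by rewrite Rplus_0_r.
Qed.

Lemma vopp_scal x : -v x = (-1) *v x.
Proof.
apply: (vadd_cancel x). rewrite vaddN -{1}(vscal1 V x) -vscalDl.
by rewrite Rplus_opp_r vscal0.
Qed.

Lemma vscal_zero a : a *v 0v = 0v.
Proof. by rewrite -(vscal0 0v) vscalA Rmult_0_r. Qed.

Lemma sn_zero i : sn V i 0v = 0.
Proof. by rewrite -(vscal0 0v) sn_scal Rabs_R0 Rmult_0_l. Qed.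

Lemma sn_opp i x : sn V i (-v x) = sn V i x.
Proof. by rewrite vopp_scal sn_scal Rabs_Ropp Rabs_R1 Rmult_1_l. Qed.

Lemma sn_nonneg i x : 0 <= sn V i x.
Proof.
have := sn_triangle V i x (-v x). rewrite vaddN sn_zero sn_opp. lra.
Qed.

Lemma vsub_chain a b c : vadd V (vsub V a b) (vsub V b c) = vsub V a c.
Proof.
rewrite /vsub vaddA -(vaddA _ a) vaddNl vadd0. done.
Qed.

Lemma sn_vsub_tri i a b c :
  sn V i (vsub V a c) <= sn V i (vsub V a b) + sn V i (vsub V b c).
Proof. rewrite -(vsub_chain a b c). apply: sn_triangle. Qed.

Lemma vopp_vsub a b : -v (vsub V a b) = vsub V b a.
Proof.
apply: (vadd_cancel (vsub V a b)). by rewrite vaddN vsub_chain /vsub vaddN.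
Qed.

Lemma sn_vsub_sym i a b : sn V i (vsub V a b) = sn V i (vsub V b a).
Proof. by rewrite -vopp_vsub sn_opp. Qed.

Lemma vsub_diag a : vsub V a a = 0v.
Proof. by rewrite /vsub vaddN. Qed.

Lemma vscal_vsub c a b : c *v (vsub V a b) = vsub V (c *v a) (c *v b).
Proof. by rewrite /vsub vscalDr !vopp_scal !vscalA Rmult_comm. Qed.

Lemma vsub_vsub a b c : vsub V (vsub V a c) (vsub V b c) = vsub V a b.
Proof.
rewrite /vsub.
have -> : -v (b +v -v c) = (-v b) +v c.
  by rewrite !vopp_scal vscalDr vscalA; do 2 f_equal; rewrite ?vscal1 //; field_simplify (-1 * -1); rewrite vscal1.
rewrite (vaddC V (-v b)) vaddA -(vaddA V a) vaddNl vadd0 //.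
Qed.

Lemma lin_zero (l : car V -> R) :
  (forall a x, l (a *v x) = a * l x) -> l 0v = 0.
Proof. move=> Hs. by rewrite -(vscal0 0v) Hs Rmult_0_l. Qed.

Lemma lin_opp (l : car V -> R) :
  (forall a x, l (a *v x) = a * l x) -> forall x, l (-v x) = - l x.
Proof. move=> Hs x. rewrite vopp_scal Hs. ring. Qed.

Lemma lin_vsub (l : car V -> R) :
  (forall x y, l (x +v y) = l x + l y) ->
  (forall a x, l (a *v x) = a * l x) -> forall x y, l (vsub V x y) = l x - l y.
Proof. move=> Ha Hs x y. rewrite /vsub Ha lin_opp //. Qed.

Lemma vopp_add x y : -v (x +v y) = (-v x) +v (-v y).
Proof. by rewrite !vopp_scal vscalDr. Qed.

Lemma vsub_addr x y z : vsub V (x +v y) (z +v y) = vsub V x z.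
Proof.
rewrite /vsub vopp_add (vaddC V (-v z)) vaddA -(vaddA V x) vaddN vadd0 //.
Qed.

Lemma eq_vsub_swap a b c d : a +v b = c +v d -> vsub V a c = vsub V d b.
Proof.
move=> H. rewrite -(vsub_addr a b c) H (vaddC V c d) (vaddC V c b) vsub_addr //.
Qed.

End Alg.


Section HB.
Context (V : LCS) (i : Idx V).
Local Notation "x +v y" := (vadd V x y) (at level 50, left associativity).
Local Notation "-v x" := (vopp V x) (at level 35).
Local Notation "a *v x" := (vscal V a x) (at level 40).
Local Notation "0v" := (vzero V).
Local Notation p := (sn V i).

Definition good (A : car V * R -> Prop) : Prop :=
  [/\ A (0v, 0),
   (forall x a y b, A (x, a) -> A (y, b) -> A (x +v y, a + b)),
   (forall t x a, A (x, a) -> A (t *v x, t * a)),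
   (forall x a b, A (x, a) -> A (x, b) -> a = b) &
   (forall x a, A (x, a) -> a <= p x)].

Lemma hahn_banach_rel (v : car V) :
  exists A, good A /\ (forall a, A (a *v v, a * p v)) /\
    forall x, exists a, A (x, a).
Proof.
pose A0 := fun z : car V * R => exists a, z = (a *v v, a * p v).
have gA0 : good A0.
  split.
  - exists 0. by rewrite vscal0 Rmult_0_l.
  - move=> x a y b [s Hs] [t Ht]. case: Hs => -> ->. case: Ht => -> ->.
    exists (s + t). by rewrite vscalDl Rmult_plus_distr_r.
  - move=> t x a [s Hs]. case: Hs => -> ->. exists (t * s).
    by rewrite vscalA Rmult_assoc.
  - move=> x a b [s Hs] [t Ht]. case: Hs => ? ?; subst. case: Ht => Hx ?; subst.
    have: (s - t) *v v = 0v.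
      rewrite /Rminus (_ : - t = -1 * t); last ring.
      rewrite vscalDl -vscalA -vopp_scal Hx vaddN //.
    move=> H0. case: (Req_dec s t) => [->|Hst] //.
    have: p ((s - t) *v v) = 0 by rewrite H0 sn_zero.
    rewrite sn_scal => /Rmult_integral [H1|->]; last by ring.
    exfalso. have := Rabs_pos_lt (s - t) (Rminus_eq_contra _ _ Hst). lra.
  - move=> x a [s Hs]. case: Hs => ? ?; subst. rewrite sn_scal.
    apply: Rmult_le_compat_r; first exact: sn_nonneg. exact: RRle_abs.
pose P := fun B : car V * R -> Prop => (forall z, ~ B z) \/ (good B /\ forall z, A0 z -> B z).
have [A [PA Amax]] : exists A, P A /\ forall B, classical_sets.proper A B -> ~ P B.
  apply: classical_sets.Zorn_bigcup => F FP Ftot.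
  case: (classic (exists X, F X /\ exists z, X z)) => [[X0 [FX0 [z0 X0z0]]]|Hno].
  - right.
    have gF : forall X, F X -> forall z, X z -> good X /\ forall z, A0 z -> X z.
      move=> X FX z Xz. case: (FP X FX) => //. by move=> /(_ z).
    have [gX0 A0X0] := gF X0 FX0 z0 X0z0.
    have tot2 : forall X Y z w, F X -> F Y -> X z -> Y w -> exists Z, F Z /\ X z /\ Z z /\ Z w /\ (forall u, X u -> Z u) /\ (forall u, Y u -> Z u).
      move=> X Y z w FX FY Xz Yw. case: (Ftot X Y FX FY) => HXY.
      + exists Y. repeat split => //; by apply: HXY.
      + exists X. repeat split => //; by apply: HXY.
    split; last first.
      move=> z Hz. exists X0 => //. by apply: A0X0.
    split.
    + exists X0 => //. by case: gX0.
    + move=> x a y b [X FX Xz] [Y FY Yw].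
      have [Z [FZ [_ [Zz [Zw _]]]]] := tot2 X Y _ _ FX FY Xz Yw.
      exists Z => //. have [[_ Hadd _ _ _] _] := gF Z FZ _ Zz. by apply: Hadd.
    + move=> t x a [X FX Xz]. exists X => //.
      have [[_ _ Hs _ _] _] := gF X FX _ Xz. by apply: Hs.
    + move=> x a b [X FX Xz] [Y FY Yw].
      have [Z [FZ [_ [Zz [Zw _]]]]] := tot2 X Y _ _ FX FY Xz Yw.
      have [[_ _ _ Hf _] _] := gF Z FZ _ Zz. by apply: Hf Zz Zw.
    + move=> x a [X FX Xz]. have [[_ _ _ _ Hd] _] := gF X FX _ Xz. by apply: Hd.
  - left. move=> z [X FX Xz]. apply: Hno. by exists X; split => //; exists z.
have [gA A0A] : good A /\ forall z, A0 z -> A z.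
  case: PA => // Hempty. exfalso. apply: (Amax A0); last by right.
  split; first by move=> z /Hempty.
  move=> H. apply: (Hempty (0v, 0)). apply: H. by case: gA0.
have [A00 Aadd Ascal Afun Adom] := gA.
exists A. split => //. split.
  move=> a. apply: A0A. by exists a.
apply: NNPP => Hnt. have [x0 Hx0] := not_all_ex_not _ _ Hnt.
have Hx0' : forall a, ~ A (x0, a) by move=> a Ha; apply: Hx0; exists a.
pose E := fun r => exists u a, A (u, a) /\ r = a - p (vsub V u x0).
have bnd : forall u a u' a', A (u, a) -> A (u', a') -> a - p (vsub V u x0) <= p (u' +v x0) - a'.
  move=> u a u' a' Hu Hu'.
  have H1 := Adom _ _ (Aadd _ _ _ _ Hu Hu').
  have : u +v u' = vsub V u x0 +v (u' +v x0).
    rewrite /vsub -vaddA (vaddA V (-v x0)) (vaddC V (-v x0)) -(vaddA V u') vaddNl vadd0 //.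
  move=> Heq. have := sn_triangle V i (vsub V u x0) (u' +v x0). rewrite -Heq. lra.
have [c [Hc1 Hc2]] : { c | is_lub E c }.
  apply: completeness.
  - exists (p (0v +v x0) - 0). move=> r [u [a [Hu ->]]]. by apply: bnd.
  - exists (0 - p (vsub V 0v x0)). by exists 0v, 0.
have cup : forall u a, A (u, a) -> a - p (vsub V u x0) <= c.
  move=> u a Hu. apply: Hc1. by exists u, a.
have clow : forall u a, A (u, a) -> c <= p (u +v x0) - a.
  move=> u a Hu. apply: Hc2 => r [u' [a' [Hu' ->]]]. by apply: bnd.
pose A' := fun z : car V * R => exists u a t, A (u, a) /\ z = (u +v t *v x0, a + t * c).
apply: (Amax A').
  split.
  - move=> [x a] Ha. exists x, a, 0. split => //. by rewrite vscal0 vadd0 Rmult_0_l Rplus_0_r.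
  - move=> H. apply: (Hx0' c). apply: H. exists 0v, 0, 1. split=>//.
    by rewrite vscal1 vadd0l Rmult_1_l Rplus_0_l.
have gA' : good A'.
  split.
  - exists 0v, 0, 0. split => //. by rewrite vscal0 vadd0 Rmult_0_l Rplus_0_r.
  - move=> x a y b [u [a1 [t [Hu He]]]] [u' [a1' [t' [Hu' He']]]].
    case: He => ? ?; case: He' => ? ?; subst.
    exists (u +v u'), (a1 + a1'), (t + t'). split; first by apply: Aadd.
    congr pair; last ring.
    rewrite vscalDl -!vaddA; congr vadd. rewrite vaddA (vaddC V _ u') -vaddA //.
  - move=> s x a [u [a1 [t [Hu He]]]]. case: He => ? ?; subst.
    exists (s *v u), (s * a1), (s * t). split; first by apply: Ascal.
    congr pair; last ring. by rewrite vscalDr vscalA.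
  - move=> x a b [u [a1 [t [Hu He]]]] [u' [a1' [t' [Hu' He']]]].
    case: He => Hx ->; case: He' => Hx' ->.
    have Heq : u +v t *v x0 = u' +v t' *v x0 by rewrite -Hx -Hx'.
    case: (Req_dec t t') => Htt.
    + subst t'. have Huu : u = u'.
        have := eq_vsub_swap V _ _ _ _ Heq. rewrite vsub_diag.
        move=> H. have : vsub V u u' +v u' = u' by rewrite H vadd0l.
        rewrite /vsub -vaddA vaddNl vadd0 //.
      subst u'. rewrite (Afun _ _ _ Hu Hu'). ring.
    + exfalso. have := eq_vsub_swap V _ _ _ _ Heq.
      rewrite /vsub (vopp_scal V (t *v x0)) vscalA -vscalDl => H.
      have Hd : A (vsub V u u', a1 - a1').
        rewrite /vsub /Rminus. apply: Aadd => //.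
        rewrite vopp_scal (_ : - a1' = -1 * a1'); last ring. by apply: Ascal.
      have := Ascal (/ (t' + -1 * t)) _ _ Hd.
      rewrite /vsub H vscalA Rinv_l; last lra.
      rewrite vscal1. by apply: Hx0'.
  - move=> x a [u [a1 [t [Hu He]]]]. case: He => ? ?; subst.
    case: (Rtotal_order t 0) => [Hneg|[Hz|Hpos]].
    + have Hs : 0 < - t by lra.
      have := cup _ _ (Ascal (/ (- t)) _ _ Hu).
      have -> : u +v t *v x0 = (- t) *v vsub V (/ (- t) *v u) x0.
        rewrite vscal_vsub vscalA Rinv_r; last lra.
        rewrite vscal1 /vsub vopp_scal vscalA; do 2 f_equal; ring.
      rewrite sn_scal Rabs_pos_eq; last lra.
      move=> H. have : - t * (/ - t * a1 - p (vsub V (/ - t *v u) x0)) <= - t * c.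
        apply: Rmult_le_compat_l => //; lra.
      rewrite Rmult_minus_distr_l -Rmult_assoc Rinv_r; last lra. lra.
    + subst t. rewrite vscal0 vadd0 Rmult_0_l Rplus_0_r. by apply: Adom.
    + have := clow _ _ (Ascal (/ t) _ _ Hu).
      have -> : u +v t *v x0 = t *v (/ t *v u +v x0).
        rewrite vscalDr vscalA Rinv_r; last lra. by rewrite vscal1.
      rewrite sn_scal Rabs_pos_eq; last lra.
      move=> H. have : t * c <= t * (p (/ t *v u +v x0) - / t * a1).
        apply: Rmult_le_compat_l => //; lra.
      rewrite Rmult_minus_distr_l -(Rmult_assoc t) Rinv_r; last lra. lra.
right. split => // z Hz. have [[x a] Ha] : exists z', z' = z by exists z.
subst z. exists x, a, 0. split; first by apply: A0A.
by rewrite vscal0 vadd0 Rmult_0_l Rplus_0_r.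
Qed.

Lemma hahn_banach (v : car V) : exists l, cont_linear V l /\ dual_bound V i l 1 /\
   l v = p v /\ (forall u, Rabs (l u) <= p u).
Proof.
have [A [[A00 Aadd Ascal Afun Adom] [A0A tot]]] := hahn_banach_rel v.
pose l := fun x => proj1_sig (constructive_indefinite_description _ (tot x)).
have Al : forall x, A (x, l x) by move=> x; rewrite /l; case: constructive_indefinite_description.
have ladd : forall x y, l (x +v y) = l x + l y.
  move=> x y. apply: (Afun _ _ _ (Al _)). by apply: Aadd.
have lscal : forall a x, l (a *v x) = a * l x.
  move=> a x. apply: (Afun _ _ _ (Al _)). by apply: Ascal.
have labs : forall u, Rabs (l u) <= p u.
  move=> u. apply: Rabs_le. split; last by apply: Adom.
  have := Adom _ _ (Al (-v u)). rewrite lin_opp // sn_opp. lra.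
exists l. split; [split; [done|split; [done|]]|split; [|split]] => //.
- move=> x eps He. exists [:: i], eps. split => // y Hy.
  rewrite -(lin_vsub V l ladd lscal). apply: Rle_lt_trans (labs _) _.
  apply: Hy. by left.
- move=> u Hu. apply: Rle_trans (Adom _ _ (Al u)) Hu.
- apply: (Afun _ _ _ (Al v)). have := A0A 1. by rewrite vscal1 Rmult_1_l.
Qed.

Lemma sn_le_dual (u : car V) (K : R) :
  (forall l, cont_linear V l -> dual_bound V i l 1 -> l u <= K) -> p u <= K.
Proof.
move=> H. have [l [Hl [Hb [Hv _]]]] := hahn_banach u. rewrite -Hv. by apply: H.
Qed.

End HB.


Lemma Rpower_pos x t : 0 < Rpower x t.
Proof. rewrite /Rpower. apply: exp_pos. Qed.

Lemma Rpower_mono x y t : 0 <= t -> 0 < x -> x <= y -> Rpower x t <= Rpower y t.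
Proof. move=> Ht Hx Hxy. apply: Rle_Rpower_l => //. Qed.

Lemma Rpower_small t eps : 0 < t -> 0 < eps ->
  exists d, 0 < d /\ forall x, 0 < x -> x < d -> Rpower x t < eps.
Proof.
move=> Ht He. exists (Rpower eps (/ t)). split; first exact: Rpower_pos.
move=> x Hx Hxd. have := Rlt_Rpower_l x (Rpower eps (/ t)) t Ht (conj Hx Hxd).
rewrite Rpower_mult Rinv_l; last lra. by rewrite Rpower_1.
Qed.

Lemma fpart_bounds k : 0 < k -> (forall n : nat, k <> INR n) -> 0 < fpart k < 1.
Proof.
move=> Hk Hn. rewrite /fpart /frac_part.
have [H1 H2] := base_Int_part k.
split; last lra.
case: (Rle_lt_or_eq_dec _ _ H1) => H; first lra.
exfalso. have Hz : (0 <= Int_part k)%Z.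
  have : (-1 < Int_part k)%Z. apply: lt_IZR. lra.
  by move/Zlt_le_succ.
apply: (Hn (Z.to_nat (Int_part k))). rewrite INR_IZR_INZ Z2Nat.id //.
Qed.

Lemma shift_shift m s j a b : shift m (shift m s j a) j b = shift m s j (a + b).
Proof.
apply: functional_extensionality => i. rewrite /shift. case: (i == j) => //. ring.
Qed.

Lemma shift0 m s j : shift m s j 0 = s.
Proof.
apply: functional_extensionality => i. rewrite /shift. case: (i == j) => //. ring.
Qed.

Lemma foldr_shift m (s : Rm m) j a b (l : seq 'I_m) : uniq l ->
  foldr (fun i acc => (shift m s j a i - shift m s j b i) * (shift m s j a i - shift m s j b i) + acc) 0 l
  = if j \in l then (a - b) * (a - b) else 0.
Proof.
elim: l => [//|x l IH] /= /andP [Hx Hu]. rewrite IH // in_cons /shift.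
move: Hx. case: (eqVneq x j) => [->|Hne] Hx.
  rewrite (negbTE Hx) /=. ring.
rewrite /=. ring.
Qed.

Lemma dist_shift m s j a b : distRm m (shift m s j a) (shift m s j b) = Rabs (a - b).
Proof.
rewrite /distRm foldr_shift ?enum_uniq // mem_enum.
have -> : (a - b) * (a - b) = Rsqr (a - b) by [].
apply: sqrt_Rsqr_abs.
Qed.

Lemma dist_shift0 m s j h : distRm m (shift m s j h) s = Rabs h.
Proof. rewrite -{2}(shift0 m s j) dist_shift. by rewrite Rminus_0_r. Qed.

Lemma shift_neq m s j a b : a <> b -> shift m s j a <> shift m s j b.
Proof.
move=> Hab He. have := dist_shift m s j a b. rewrite He.
have -> : distRm m (shift m s j b) (shift m s j b) = Rabs (b - b) by rewrite dist_shift.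
rewrite Rminus_diag Rabs_R0 => H. symmetry in H. apply: Hab.
case: (Req_dec a b) => // Hne'. have := Rabs_pos_lt (a-b) (Rminus_eq_contra _ _ Hne'). lra.
Qed.

Section ContLin.
Context (V : LCS).
Local Notation "x +v y" := (vadd V x y) (at level 50, left associativity).
Local Notation "-v x" := (vopp V x) (at level 35).
Local Notation "a *v x" := (vscal V a x) (at level 40).
Local Notation "0v" := (vzero V).

Definition sumF (F : list (Idx V)) (v : car V) : R :=
  List.fold_right (fun i acc => sn V i v + acc) 0 F.

Lemma sumF_nonneg F v : 0 <= sumF F v.
Proof. elim: F => [|i F IH] /=; first lra. have := sn_nonneg V i v. lra. Qed.

Lemma sn_le_sumF F i v : List.In i F -> sn V i v <= sumF F v.
Proof.
elim: F => [//|i' F IH] /= [->|Hi].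
- have := sumF_nonneg F v. lra.
- have := IH Hi. have := sn_nonneg V i' v. lra.
Qed.

Lemma sumF_scal F a v : sumF F (a *v v) = Rabs a * sumF F v.
Proof. elim: F => [|i F IH] /=; first ring. rewrite IH sn_scal. ring. Qed.

Lemma vsub0 y : vsub V y 0v = y.
Proof. by rewrite /vsub vopp_scal vscal_zero vadd0. Qed.

Lemma cont_lin_bound l : cont_linear V l ->
  exists F c, 0 <= c /\ forall v, Rabs (l v) <= c * sumF F v.
Proof.
move=> [Ha [Hs Hc]].
have [F [d [Hd HF]]] := Hc 0v 1 Rlt_0_1.
have l0 := lin_zero V l Hs.
have Hd2 : 0 < 2 / d by apply: Rdiv_lt_0_compat; lra.
exists F, (2 / d). split; first lra.
move=> v. have Ha0 := sumF_nonneg F v.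
case: (Rle_lt_or_eq_dec _ _ Ha0) => Hapos.
- have Hq : 0 < d / (2 * sumF F v) by apply: Rdiv_lt_0_compat; lra.
  have Hy : forall i, List.In i F -> sn V i (vsub V ((d / (2 * sumF F v)) *v v) 0v) < d.
    move=> i Hi. rewrite vsub0 sn_scal Rabs_pos_eq; last first.
      lra.
    have := sn_le_sumF F i v Hi.
    move=> H. apply: Rle_lt_trans (Rmult_le_compat_l _ _ _ (Rlt_le _ _ Hq) H) _.
    rewrite /Rdiv Rinv_mult. field_simplify; lra.
  have := HF _ Hy. rewrite l0 Rminus_0_r Hs Rabs_mult Rabs_pos_eq; last first.
    lra.
  move=> H.
  have E : Rabs (l v) = (2 / d * sumF F v) * (d / (2 * sumF F v) * Rabs (l v)).
    field; lra.
  rewrite E. have Hp : 0 < 2 / d * sumF F v by apply: Rmult_lt_0_compat.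
  have := Rmult_lt_compat_l _ _ _ Hp H. lra.
- have Hz : forall t i, List.In i F -> sn V i (vsub V (t *v v) 0v) < d.
    move=> t i Hi. rewrite vsub0 sn_scal. have := sn_le_sumF F i v Hi. rewrite -Hapos.
    have := sn_nonneg V i v. move=> H1 H2. have -> : sn V i v = 0 by lra. rewrite Rmult_0_r. lra.
  rewrite -Hapos Rmult_0_r.
  case: (Req_dec (l v) 0) => [->|Hne]; first by rewrite Rabs_R0; lra.
  have := HF _ (Hz (2 / l v)). rewrite l0 Rminus_0_r Hs.
  have -> : 2 / l v * l v = 2 by field.
  rewrite Rabs_pos_eq; lra.
Qed.

Lemma dual_bound_abs l i B : cont_linear V l -> dual_bound V i l B ->
  0 <= B /\ forall v, Rabs (l v) <= B * sn V i v.
Proof.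
move=> [Ha [Hs Hc]] Hb.
have l0 := lin_zero V l Hs.
have HB : 0 <= B. rewrite -l0. apply: Hb. rewrite sn_zero. lra.
split => // v.
have Hn := sn_nonneg V i v.
case: (Rle_lt_or_eq_dec _ _ Hn) => Hpos.
- set q := sn V i v in Hpos *.
  have Hq : 0 < / q by apply: Rinv_0_lt_compat.
  have P1 : sn V i ((/ q) *v v) <= 1.
    rewrite sn_scal Rabs_pos_eq; last lra. rewrite Rinv_l; lra.
  have P2 : sn V i ((- / q) *v v) <= 1.
    rewrite sn_scal Rabs_Ropp Rabs_pos_eq; last lra. rewrite Rinv_l; lra.
  have H1 := Hb _ P1. have H2 := Hb _ P2. rewrite Hs in H1. rewrite Hs in H2.
  have E : l v = q * (/ q * l v) by field; lra.
  apply: Rabs_le. rewrite E. split.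
  + have := Rmult_le_compat_l _ _ _ (Rlt_le _ _ Hpos) H2. lra.
  + have := Rmult_le_compat_l _ _ _ (Rlt_le _ _ Hpos) H1. lra.
- rewrite -Hpos Rmult_0_r.
  case: (Req_dec (l v) 0) => [->|Hne]; first by rewrite Rabs_R0; lra.
  have Ht := Hb (((B + 1) / l v) *v v).
  rewrite sn_scal -Hpos Rmult_0_r Hs in Ht.
  have : (B + 1) / l v * l v = B + 1 by field.
  move=> E. rewrite E in Ht. have := Ht Rle_0_1. lra.
Qed.

Lemma lim_through l (G : R -> car V) d (Q : R -> Prop) :
  cont_linear V l ->
  (forall i eps, 0 < eps -> exists del, 0 < del /\ forall h, Q h -> Rabs h < del ->
      sn V i (vsub V (G h) d) < eps) ->
  forall eps, 0 < eps -> exists del, 0 < del /\ forall h, Q h -> Rabs h < del ->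
      Rabs (l (G h) - l d) < eps.
Proof.
move=> [_ [_ Hc]] HG eps He.
have [F [d0 [Hd0 HF]]] := Hc d eps He.
have : exists del, 0 < del /\ forall h, Q h -> Rabs h < del ->
          forall i, List.In i F -> sn V i (vsub V (G h) d) < d0.
  elim: F {HF} => [|i F [del [Hdel IH]]].
    exists 1. split; [lra|] => h _ _ i [].
  have [del' [Hdel' Hi]] := HG i d0 Hd0.
  exists (Rmin del del'). split; first by apply: Rmin_pos.
  move=> h Qh Hh i' [<-|Hin].
  + apply: Hi => //. apply: Rlt_le_trans Hh _. apply: Rmin_r.
  + apply: IH => //. apply: Rlt_le_trans Hh _. apply: Rmin_l.
move=> [del [Hdel Hall]]. exists del. split => // h Qh Hh.
apply: HF. by apply: Hall.
Qed.

End ContLin.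


Lemma RLCS_sn i x : sn RLCS i x = Rabs x.
Proof. by []. Qed.
Lemma RLCS_vsub x y : vsub RLCS x y = x - y.
Proof. by []. Qed.
Lemma RLCS_vscal a x : vscal RLCS a x = a * x.
Proof. by []. Qed.

Lemma fin_max m (P : 'I_m -> R -> Prop) :
  (forall j M M', P j M -> M <= M' -> P j M') ->
  (forall j, exists M, P j M) -> exists M, forall j, P j M.
Proof.
move=> Hmono Hex.
have : forall s : seq 'I_m, exists M, forall j, j \in s -> P j M.
  elim=> [|j s [M HM]]; first by exists 0.
  have [Mj HMj] := Hex j.
  exists (Rmax M Mj) => j'. rewrite in_cons => /orP [/eqP ->|Hj'].
  + apply: Hmono HMj _. apply: Rmax_r.
  + apply: Hmono (HM _ Hj') _. apply: Rmax_l.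
move=> /(_ (enum 'I_m)) [M HM]. exists M => j. apply: HM. by rewrite mem_enum.
Qed.

Lemma words_bound m (n : nat) : forall (Q : list 'I_m -> R -> Prop),
  (forall w M M', Q w M -> M <= M' -> Q w M') ->
  (forall w, (length w <= n)%coq_nat -> exists M, Q w M) ->
  exists M, forall w, (length w <= n)%coq_nat -> Q w M.
Proof.
elim: n => [|n IH] Q Hmono Hex.
  have [M HM] := Hex nil (le_n 0). exists M => w Hw.
  case: w Hw => [|j w] Hw //. by inversion Hw.
have Hj : forall j : 'I_m, exists M, forall w, (length w <= n)%coq_nat -> Q (j :: w) M.
  move=> j. apply: (IH (fun w M => Q (j :: w) M)).
  + move=> w M M'. apply: Hmono.
  + move=> w Hw. apply: Hex => /=. by apply: le_n_S.
have [Mj HMj] := fin_max m (fun j M => forall w, (length w <= n)%coq_nat -> Q (j :: w) M)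
  (fun j M M' H HM w Hw => Hmono _ _ _ (H w Hw) HM) Hj.
have [M0 HM0] := Hex nil (PeanoNat.Nat.le_0_l _).
exists (Rmax M0 Mj) => w. case: w => [|j w] /= Hw.
+ apply: Hmono HM0 _. apply: Rmax_l.
+ apply: Hmono (HMj j w (le_S_n _ _ Hw)) _. apply: Rmax_r.
Qed.

Lemma holder_mono V m Om th g i M M' :
  holder_le V m Om th g i M -> M <= M' -> holder_le V m Om th g i M'.
Proof.
move=> H HM s t Hs Ht Hst. apply: Rle_trans (H s t Hs Ht Hst) _.
apply: Rmult_le_compat_r => //. apply: Rlt_le. apply: Rpower_pos.
Qed.

Section Fwd.
Context (V : LCS) (m : nat) (Om : Rm m -> Prop).

Lemma sumF_sup (g : Rm m -> car V) :
  (forall i, exists M, forall s, Om s -> sn V i (g s) <= M) ->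
  forall F, exists M, forall s, Om s -> sumF V F (g s) <= M.
Proof.
move=> H. elim=> [|i F [M HM]] /=; first by exists 0 => s _; lra.
have [Mi HMi] := H i. exists (Mi + M) => s Hs.
have := HM s Hs. have := HMi s Hs. lra.
Qed.

Lemma sumF_hol th (g : Rm m -> car V) :
  (forall i, exists M, holder_le V m Om th g i M) ->
  forall F, exists M, forall s t, Om s -> Om t -> s <> t ->
    sumF V F (vsub V (g s) (g t)) <= M * Rpower (distRm m s t) th.
Proof.
move=> H. elim=> [|i F [M HM]] /=.
  exists 0 => s t _ _ _; rewrite Rmult_0_l; lra.
have [Mi HMi] := H i. exists (Mi + M) => s t Hs Ht Hst.
have := HM s t Hs Ht Hst. have := HMi s t Hs Ht Hst. lra.
Qed.

Lemma deriv_family_comp n (f : Rm m -> car V) D l :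
  cont_linear V l -> deriv_family V m Om n f D ->
  deriv_family RLCS m Om n (fun s => l (f s)) (fun w s => l (D w s)).
Proof.
move=> Hl [H0 Hp]. split.
  move=> s Hs. by rewrite H0.
move=> w j Hw s Hs i eps He.
have [Ha [Hs' _]] := Hl.
have [del [Hdel Hd]] := lim_through V l
  (fun h => vscal V (/ h) (vsub V (D w (shift m s j h)) (D w s))) (D (j :: w) s)
  (fun h => h <> 0 /\ Om (shift m s j h)) Hl
  (fun i eps He => let: ex_intro del (conj Hdel Hd) := Hp w j Hw s Hs i eps He in
     ex_intro _ del (conj Hdel (fun h Qh Hh => Hd h (proj1 Qh) Hh (proj2 Qh)))) eps He.
exists del. split => // h Hh0 Hh Hsh.
have := Hd h (conj Hh0 Hsh) Hh.
rewrite RLCS_sn RLCS_vsub RLCS_vscal RLCS_vsub Hs' (lin_vsub V l Ha Hs') //.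
Qed.

End Fwd.

Lemma forward (V : LCS) m Om k (f : Rm m -> car V) :
  in_Ck V m Om k f ->
  forall p : Idx V, exists C : R, 0 < C /\
     forall l : car V -> R, cont_linear V l ->
       in_Ck RLCS m Om k (fun s => l (f s)) /\
       (forall B : R, dual_bound V p l B ->
          Ck_seminorm_le RLCS m Om k (fun s => l (f s)) tt (C * B)).
Proof.
move=> [D [Hfam [Hsup Hhol]]] p.
have [Ms HMs] := Hsup p.
have [Mh HMh] := words_bound m (ipart k)
  (fun w M => holder_le V m Om (fpart k) (D w) p M)
  (fun w M M' H HM => holder_mono _ _ _ _ _ _ _ _ H HM)
  (fun w Hw => Hhol w Hw p).
exists (Rmax 1 (Rmax Ms Mh)). split.
  apply: Rlt_le_trans (Rmax_l _ _). lra.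
move=> l Hl.
have Hfam' := deriv_family_comp V m Om _ f D l Hl Hfam.
have [Ha [Hs _]] := Hl.
split.
- exists (fun w s => l (D w s)). split => //.
  have [F [c [Hc Hb]]] := cont_lin_bound V l Hl.
  split.
  + move=> i. have [M HM] := sumF_sup V m Om f Hsup F.
    exists (c * M) => s Hs0. rewrite RLCS_sn.
    apply: Rle_trans (Hb _) _. apply: Rmult_le_compat_l => //. by apply: HM.
  + move=> w Hw i. have [M HM] := sumF_hol V m Om (fpart k) (D w) (fun i => Hhol w Hw i) F.
    exists (c * M) => s t Hs0 Ht0 Hst. rewrite RLCS_sn RLCS_vsub -(lin_vsub V l Ha Hs).
    apply: Rle_trans (Hb _) _. rewrite Rmult_assoc.
    apply: Rmult_le_compat_l => //. by apply: HM.
- move=> B HB. have [B0 Hlb] := dual_bound_abs V l p B Hl HB.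
  exists (fun w s => l (D w s)). split => //. split.
  + move=> s Hs0. rewrite RLCS_sn. apply: Rle_trans (Hlb _) _.
    rewrite (Rmult_comm (Rmax _ _) B). apply: Rmult_le_compat_l => //.
    apply: Rle_trans (HMs s Hs0) _. apply: Rle_trans (Rmax_r _ _). apply: Rmax_l.
  + move=> w Hw s t Hs0 Ht0 Hst. rewrite RLCS_sn RLCS_vsub -(lin_vsub V l Ha Hs).
    apply: Rle_trans (Hlb _) _.
    have Hh := HMh w Hw s t Hs0 Ht0 Hst.
    have HC : Mh <= Rmax 1 (Rmax Ms Mh).
      apply: Rle_trans (Rmax_r _ _). apply: Rmax_r.
    have Hr := Rpower_pos (distRm m s t) (fpart k).
    apply: Rle_trans (Rmult_le_compat_l _ _ _ B0 Hh) _.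
    rewrite (Rmult_comm _ B) Rmult_assoc. apply: Rmult_le_compat_l => //.
    apply: Rmult_le_compat_r; lra.
Qed.


Lemma nat_unbounded (A : R) : exists N : nat, A < INR N.
Proof.
exists (Z.to_nat (up A)). have [H1 _] := archimed A.
case: (Z_le_gt_dec 0 (up A)) => Hz.
- rewrite INR_IZR_INZ Z2Nat.id; [lra|lia].
- have Hz' : (up A <= 0)%Z by lia. apply IZR_le in Hz'.
  have := pos_INR (Z.to_nat (up A)). lra.
Qed.

Lemma R_eq_eps x y : (forall eps, 0 < eps -> Rabs (x - y) < eps) -> x = y.
Proof.
move=> H. case: (Req_dec x y) => // Hne. exfalso.
have Hp := Rabs_pos_lt _ (Rminus_eq_contra _ _ Hne).
have := H _ Hp. lra.
Qed.

Section MVT.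
Context (m : nat) (Om : Rm m -> Prop) (n : nat) (F : Rm m -> R) (E : list 'I_m -> Rm m -> R).
Context (HE : deriv_family RLCS m Om n F E).

Lemma mvt_shift w j s r :
  (length w < n)%coq_nat -> 0 < r -> (forall t, distRm m t s < r -> Om t) ->
  forall h, h <> 0 -> Rabs h < r ->
  exists xi, Rabs xi <= Rabs h /\ / h * (E w (shift m s j h) - E w s) = E (j :: w) (shift m s j xi).
Proof.
move=> Hw Hr Hball h Hh0 Hhr.
pose phi := fun t => E w (shift m s j t).
have Hder : forall c, Rabs c < r -> derivable_pt_lim phi c (E (j :: w) (shift m s j c)).
  move=> c Hc eps He.
  have Hsc : Om (shift m s j c) by apply: Hball; rewrite dist_shift0.
  have [del [Hdel Hd]] := (proj2 HE) w j Hw _ Hsc tt eps He.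
  have Hpos : 0 < Rmin del (r - Rabs c) by apply: Rmin_pos; lra.
  exists (mkposreal _ Hpos) => h' Hh' Hh'r. simpl in Hh'r.
  have Hom : Om (shift m (shift m s j c) j h').
    rewrite shift_shift. apply: Hball. rewrite dist_shift0.
    have := Rmin_r del (r - Rabs c). have := Rabs_triang c h'. lra.
  have := Hd h' Hh' (Rlt_le_trans _ _ _ Hh'r (Rmin_l _ _)) Hom.
  rewrite RLCS_sn RLCS_vsub RLCS_vscal RLCS_vsub shift_shift /phi /Rdiv Rmult_comm //.
have [Hhp|Hhn] : 0 < h \/ h < 0 by lra.
- have Hhr' : h < r by rewrite Rabs_pos_eq in Hhr; lra.
  have Hd' : forall c, 0 <= c <= h -> derivable_pt_lim phi c (E (j :: w) (shift m s j c)).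
    move=> c Hc. apply: Hder. rewrite Rabs_pos_eq; lra.
  have [c [Hc1 Hc2]] := MVT_cor2 phi (fun c => E (j :: w) (shift m s j c)) 0 h Hhp Hd'.
  exists c. split; first by rewrite !Rabs_pos_eq; lra.
  rewrite /phi shift0 in Hc1. rewrite Hc1. field. lra.
- have Hhr' : - h < r by rewrite Rabs_left in Hhr; lra.
  have Hd' : forall c, h <= c <= 0 -> derivable_pt_lim phi c (E (j :: w) (shift m s j c)).
    move=> c Hc. apply: Hder. rewrite Rabs_left1; lra.
  have [c [Hc1 Hc2]] := MVT_cor2 phi (fun c => E (j :: w) (shift m s j c)) h 0 Hhn Hd'.
  exists c. split; first by rewrite !Rabs_left1; lra.
  rewrite /phi shift0 in Hc1. have -> : E w (shift m s j h) - E w s = - (E w s - E w (shift m s j h)) by ring.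
  rewrite Hc1. field. lra.
Qed.

End MVT.

Section Conv.
Context (V : LCS) (m : nat) (Om : Rm m -> Prop) (k : R) (f : Rm m -> car V).
Context (Hopen : is_open m Om) (Hcompl : seq_complete V) (Hth : 0 < fpart k < 1).
Context (Hyp : forall p : Idx V, exists C : R, 0 < C /\
     forall l : car V -> R, cont_linear V l ->
       in_Ck RLCS m Om k (fun s => l (f s)) /\
       (forall B : R, dual_bound V p l B ->
          Ck_seminorm_le RLCS m Om k (fun s => l (f s)) tt (C * B))).

Local Notation n := (ipart k).
Local Notation th := (fpart k).

Definition Qt (g : Rm m -> car V) j s h :=
  vscal V (/ h) (vsub V (g (shift m s j h)) (g s)).

Definition lim_prop (g : Rm m -> car V) j s d :=
  forall i eps, 0 < eps -> exists delta, 0 < delta /\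
    forall h, h <> 0 -> Rabs h < delta -> Om (shift m s j h) ->
      sn V i (vsub V (Qt g j s h) d) < eps.

Definition Inv (g : Rm m -> car V) (w : list 'I_m) :=
  forall l, cont_linear V l -> forall E, deriv_family RLCS m Om n (fun s => l (f s)) E ->
    forall s, Om s -> l (g s) = E w s.

Lemma key_est g w j s r :
  (length w < n)%coq_nat -> Inv g w -> 0 < r -> (forall t, distRm m t s < r -> Om t) ->
  forall i, exists C, 0 < C /\ forall h h', h <> 0 -> h' <> 0 -> Rabs h < r -> Rabs h' < r ->
    sn V i (vsub V (Qt g j s h) (Qt g j s h')) <= C * Rpower (Rabs h + Rabs h') th.
Proof.
move=> Hw Hinv Hr Hball i.
have [C [HC HCl]] := Hyp i.
exists C. split => // h h' Hh Hh' Hhr Hh'r.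
apply: sn_le_dual => l Hl Hb.
have [_ HCk] := HCl l Hl.
have [E [Efam [_ Ehol]]] := HCk 1 Hb.
have [Ha [Hs _]] := Hl.
have Hs0 : Om s by apply: Hball; have := dist_shift0 m s j 0; rewrite shift0 Rabs_R0 => ->; lra.
have Hlq : forall h, h <> 0 -> Rabs h < r -> l (Qt g j s h) = / h * (E w (shift m s j h) - E w s).
  move=> h0 Hh0 Hh0r. rewrite /Qt Hs (lin_vsub V l Ha Hs).
  rewrite (Hinv l Hl E Efam _ Hs0) (Hinv l Hl E Efam) //.
  apply: Hball. by rewrite dist_shift0.
rewrite (lin_vsub V l Ha Hs) Hlq // Hlq //.
have [xi [Hxi Exi]] := mvt_shift m Om n _ E Efam w j s r Hw Hr Hball h Hh Hhr.
have [xi' [Hxi' Exi']] := mvt_shift m Om n _ E Efam w j s r Hw Hr Hball h' Hh' Hh'r.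
rewrite Exi Exi'.
have Hpos : 0 < Rabs h + Rabs h'.
  have := Rabs_pos_lt _ Hh. have := Rabs_pos h'. lra.
have HRp := Rpower_pos (Rabs h + Rabs h') th.
case: (Req_dec xi xi') => [->|Hne].
  rewrite Rminus_diag. apply: Rlt_le. by apply: Rmult_lt_0_compat.
have Hjw : (length (j :: w) <= n)%coq_nat by exact: Hw.
have Hom : forall x, Rabs x <= Rabs h -> Om (shift m s j x).
  move=> x Hx. apply: Hball. rewrite dist_shift0. lra.
have Hom' : forall x, Rabs x <= Rabs h' -> Om (shift m s j x).
  move=> x Hx. apply: Hball. rewrite dist_shift0. lra.
have := Ehol (j :: w) Hjw _ _ (Hom _ Hxi) (Hom' _ Hxi') (shift_neq m s j _ _ Hne).
rewrite RLCS_sn RLCS_vsub dist_shift Rmult_1_r => Hle.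
apply: Rle_trans (Rle_abs _) _. apply: Rle_trans Hle _.
apply: Rmult_le_compat_l; first lra.
apply: Rpower_mono; first lra.
  apply: Rabs_pos_lt. lra.
have := Rabs_triang xi (- xi'). rewrite Rabs_Ropp /Rminus. lra.
Qed.

Lemma exist_lim g w j s :
  (length w < n)%coq_nat -> Inv g w -> Om s -> exists d, lim_prop g j s d.
Proof.
move=> Hw Hinv Hs.
have [r [Hr Hball]] := Hopen s Hs.
pose hN := fun N : nat => r / (INR N + 2).
have hpos : forall N, 0 < hN N.
  move=> N. apply: Rdiv_lt_0_compat => //. have := pos_INR N. lra.
have hlt : forall N, hN N < r.
  move=> N. rewrite /hN. have := pos_INR N => HN.
  apply: (Rmult_lt_reg_r (INR N + 2)); first lra.
  rewrite /Rdiv Rmult_assoc Rinv_l; last lra. nra.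
have hmono : forall N N', (N <= N')%coq_nat -> hN N' <= hN N.
  move=> N N' HNN. rewrite /hN. have := le_INR _ _ HNN. have := pos_INR N => H1 H2.
  apply: Rmult_le_compat_l; first lra.
  apply: Rinv_le_contravar; lra.
have hsmall : forall del, 0 < del -> exists N, hN N < del.
  move=> del Hdel. have [N HN] := nat_unbounded (r / del). exists N.
  rewrite /hN. have := pos_INR N => H1.
  apply: (Rmult_lt_reg_r (INR N + 2)); first lra.
  rewrite /Rdiv Rmult_assoc Rinv_l; last lra. rewrite Rmult_1_r.
  have : r < del * INR N.
    have := Rmult_lt_compat_l _ _ _ Hdel HN. rewrite /Rdiv. 
    have -> : del * (r * / del) = r by field; lra. done.
  nra.
have Habs : forall N, Rabs (hN N) = hN N by move=> N; apply: Rabs_pos_eq; apply: Rlt_le.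
have Hlt : forall N, Rabs (hN N) < r by move=> N; rewrite Habs; apply: hlt.
have hne : forall N, hN N <> 0 by move=> N; have := hpos N; lra.
pose u := fun N => Qt g j s (hN N).
have Hcau : cauchy_seq V u.
  move=> i eps He.
  have [C [HC Hest]] := key_est g w j s r Hw Hinv Hr Hball i.
  have [d1 [Hd1 Hsm]] := Rpower_small th (eps / C) (proj1 Hth) (Rdiv_lt_0_compat _ _ He HC).
  have Hd12 : 0 < d1 / 2 by lra.
  have [N0 HN0] := hsmall (d1 / 2) Hd12.
  exists N0 => p q Hp Hq.
  have := Hest _ _ (hne p) (hne q) (Hlt p) (Hlt q).
  rewrite !Habs => H1. apply: Rle_lt_trans H1 _.
  have Hs1 : hN p + hN q < d1.
    have := hmono _ _ Hp. have := hmono _ _ Hq. lra.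
  have Hpq : 0 < hN p + hN q by have := hpos p; have := hpos q; lra.
  have := Hsm _ Hpq Hs1.
  move=> H2. have := Rmult_lt_compat_l _ _ _ HC H2.
  have -> : C * (eps / C) = eps by field; lra. done.
have [d Hd] := Hcompl u Hcau.
exists d => i eps He.
have [C [HC Hest]] := key_est g w j s r Hw Hinv Hr Hball i.
have He2 : 0 < eps / 2 by lra.
have [d1 [Hd1 Hsm]] := Rpower_small th (eps / 2 / C) (proj1 Hth) (Rdiv_lt_0_compat _ _ He2 HC).
have [N1 HN1] := Hd i (eps / 2) He2.
have Hd12 : 0 < d1 / 2 by lra.
have [N2 HN2] := hsmall (d1 / 2) Hd12.
pose N := Nat.max N1 N2.
exists (Rmin r (d1 / 2)). split; first by apply: Rmin_pos; lra.
move=> h Hh0 Hh _.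
apply: Rle_lt_trans (sn_vsub_tri V i _ (u N) _) _.
have Hh1 : Rabs h < r by have := Rmin_l r (d1 / 2); lra.
have Hh2 : Rabs h < d1 / 2 by have := Rmin_r r (d1 / 2); lra.
have := Hest _ _ Hh0 (hne N) Hh1 (Hlt N). rewrite Habs => H1.
have HNN2 : hN N <= hN N2 by apply: hmono; apply: Nat.le_max_r.
have Hsum : Rabs h + hN N < d1 by lra.
have Hpos : 0 < Rabs h + hN N by have := hpos N; have := Rabs_pos h; lra.
have := Hsm _ Hpos Hsum => H2.
have H3 : C * Rpower (Rabs h + hN N) th < eps / 2.
  have := Rmult_lt_compat_l _ _ _ HC H2. have -> : C * (eps / 2 / C) = eps / 2 by field; lra. done.
have := HN1 N (Nat.le_max_l _ _). rewrite /u. lra.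
Qed.

Fixpoint DD (w : list 'I_m) : Rm m -> car V :=
  match w with
  | nil => f
  | j :: w' => fun s => epsilon (inhabits (vzero V)) (lim_prop (DD w') j s)
  end.

Lemma DD_lim w j s : (length w < n)%coq_nat -> Inv (DD w) w -> Om s ->
  lim_prop (DD w) j s (DD (j :: w) s).
Proof.
move=> Hw Hinv Hs. exact: (epsilon_spec (inhabits (vzero V)) (lim_prop (DD w) j s) (exist_lim (DD w) w j s Hw Hinv Hs)).
Qed.

Lemma Inv_step w j : (length w < n)%coq_nat -> Inv (DD w) w -> Inv (DD (j :: w)) (j :: w).
Proof.
move=> Hw Hinv l Hl E Efam s Hs.
have Hlim := DD_lim w j s Hw Hinv Hs.
have [Ha [Hsc _]] := Hl.
have [r [Hr Hball]] := Hopen s Hs.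
apply: R_eq_eps => eps He.
have He2 : 0 < eps / 2 by lra.
have [da [Hda Hla]] := lim_through V l (Qt (DD w) j s) (DD (j :: w) s)
  (fun h => h <> 0 /\ Om (shift m s j h)) Hl
  (fun i eps He => let: ex_intro del (conj Hdel Hd) := Hlim i eps He in
     ex_intro _ del (conj Hdel (fun h Qh Hh => Hd h (proj1 Qh) Hh (proj2 Qh)))) _ He2.
have [db [Hdb Hlb]] := (proj2 Efam) w j Hw s Hs tt _ He2.
pose h := Rmin (Rmin da db) r / 2.
have Hm : 0 < Rmin (Rmin da db) r by apply: Rmin_pos => //; apply: Rmin_pos.
have Hhpos : 0 < h by rewrite /h; lra.
have Hh0 : h <> 0 by lra.
have Hhabs : Rabs h = h by apply: Rabs_pos_eq; lra.
have H1 := Rmin_l (Rmin da db) r. have H2 := Rmin_r (Rmin da db) r.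
have H3 := Rmin_l da db. have H4 := Rmin_r da db.
have Hom : Om (shift m s j h) by apply: Hball; rewrite dist_shift0 Hhabs /h; lra.
have := Hla h (conj Hh0 Hom) ltac:(rewrite Hhabs /h; lra).
have := Hlb h Hh0 ltac:(rewrite Hhabs /h; lra) Hom.
rewrite RLCS_sn RLCS_vsub RLCS_vscal RLCS_vsub.
rewrite /Qt Hsc (lin_vsub V l Ha Hsc) (Hinv l Hl E Efam _ Hom) (Hinv l Hl E Efam _ Hs).
move=> A B.
have := Rabs_triang (/ h * (E w (shift m s j h) - E w s) - E (j :: w) s)
   (l (DD (j :: w) s) - / h * (E w (shift m s j h) - E w s)).
have -> : / h * (E w (shift m s j h) - E w s) - E (j :: w) s +
   (l (DD (j :: w) s) - / h * (E w (shift m s j h) - E w s)) = l (DD (j :: w) s) - E (j :: w) s by ring.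
rewrite -Rabs_Ropp in B.
have E2 : - (/ h * (E w (shift m s j h) - E w s) - l (DD (j :: w) s)) = l (DD (j :: w) s) - / h * (E w (shift m s j h) - E w s) by ring.
rewrite E2 in B.
lra.
Qed.

Lemma Inv_all w : (length w <= n)%coq_nat -> Inv (DD w) w.
Proof.
elim: w => [|j w IH] Hw.
- move=> l Hl E Efam s Hs /=. by rewrite (proj1 Efam).
- have Hw' : (length w < n)%coq_nat by exact: Hw.
  apply: Inv_step => //. apply: IH. simpl in Hw. lia.
Qed.

Lemma converse : in_Ck V m Om k f.
Proof.
exists DD. split; [split|split].
- by [].
- move=> w j Hw s Hs. apply: DD_lim => //. apply: Inv_all. lia.
- move=> i. have [C [HC HCl]] := Hyp i. exists C => s Hs.
  apply: sn_le_dual => l Hl Hb.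
  have [E [Efam [Esup _]]] := (proj2 (HCl l Hl)) 1 Hb.
  have := Esup s Hs. rewrite RLCS_sn Rmult_1_r => H. apply: Rle_trans (Rle_abs _) H.
- move=> w Hw i. have [C [HC HCl]] := Hyp i. exists C => s t Hs Ht Hst.
  apply: sn_le_dual => l Hl Hb.
  have [Ha [Hsc _]] := Hl.
  have [E [Efam [_ Ehol]]] := (proj2 (HCl l Hl)) 1 Hb.
  have := Ehol w Hw s t Hs Ht Hst. rewrite RLCS_sn RLCS_vsub Rmult_1_r => H.
  rewrite (lin_vsub V l Ha Hsc) (Inv_all w Hw l Hl E Efam s Hs) (Inv_all w Hw l Hl E Efam t Ht).
  apply: Rle_trans (Rle_abs _) H.
Qed.

End Conv.


Theorem lemma2p1 (V : LCS) (m : nat) (Om : Rm m -> Prop) (k : R)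
    (f : Rm m -> car V) :
  hausdorff V -> seq_complete V -> is_open m Om ->
  0 < k -> (forall n : nat, k <> INR n) ->
  (in_Ck V m Om k f <->
   forall p : Idx V, exists C : R, 0 < C /\
     forall l : car V -> R, cont_linear V l ->
       in_Ck RLCS m Om k (fun s => l (f s)) /\
       (forall B : R, dual_bound V p l B ->
          Ck_seminorm_le RLCS m Om k (fun s => l (f s)) tt (C * B))).
Proof.
move=> Hhaus Hcompl Hopen Hk Hn.
have Hth := fpart_bounds k Hk Hn.
split.
- exact: forward.
- move=> Hyp. exact: (converse V m Om k f Hopen Hcompl Hth Hyp).
Qed.
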